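(* Let $A=(a_{ij}), B=(b_{ij})\in\mathbb{R}^{n\times n}_+$ be Schur-stable extended Leslie matrices, i.e. entrywise nonnegative matrices whose only possibly nonzero entries are those in the first row, the subdiagonal entries $(i,i-1)$ for $2\le i\le n$, and the $(n,n)$ entry. Let $\mathcal{L}_{A,B}$ be the set of entrywise nonnegative matrices $D\in\mathbb{R}^{n\times n}$ whose only possibly nonzero entries are the subdiagonal entries $d_{i,i-1}$ ($2\le i\le n$) and the entry $d_{nn}$, and such that $A-D\ge 0$ and $B-D\ge 0$ entrywise. Let $\mathcal{L}^1_{A,B}$ be the set of those $D\in\mathcal{L}_{A,B}$ that have only one non-zero row (all other rows zero). Then for every $D\in\mathcal{L}^1_{A,B}$ the matrix $$M=\begin{pmatrix} A-D & D\\ D & B-D\end{pmatrix}$$ is Schur-stable.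
   Context: A real square matrix is Schur-stable if its spectral radius is strictly less than $1$. $\mathbb{R}^{n\times n}_+$ denotes the set of entrywise nonnegative $n\times n$ real matrices; inequalities between matrices are entrywise. *)

(* Defs.v *)
From HB Require Import structures.
From mathcomp Require Import all_boot all_order all_algebra.
From mathcomp Require Import complex.
From mathcomp Require Import reals.
Set Implicit Arguments. Unset Strict Implicit. Unset Printing Implicit Defensive.
Import Order.TTheory GRing.Theory Num.Theory.
Local Open Scope ring_scope.

Definition ceigen (R : rcfType) (n : nat) (A : 'M[R]_n) (z : R[i]) : bool :=
  root (map_poly (fun x : R => (x%:C)%C) (char_poly A)) z.

Definition schur_stable (R : rcfType) (n : nat) (A : 'M[R]_n) : Prop :=
  forall z : R[i], ceigen A z -> `|z| < 1.

Definition nonneg_mx (R : realDomainType) (m n : nat) (A : 'M[R]_(m, n)) : Prop :=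
  forall i j, 0 <= A i j.

(* Indices are 0-based: row 1 is index 0, entry (i,i-1) is (i, j) with i = j+1,
   and entry (n,n) is (n-1, n-1). *)
Definition ext_leslie_pos (n : nat) (i j : 'I_n) : bool :=
  [|| val i == 0%N, val i == (val j).+1 | (val i == n.-1) && (val j == n.-1)].

Definition ext_leslie (R : realDomainType) (n : nat) (A : 'M[R]_n) : Prop :=
  nonneg_mx A /\ forall i j, ~~ ext_leslie_pos i j -> A i j = 0.

Definition subdiag_nn_pos (n : nat) (i j : 'I_n) : bool :=
  (val i == (val j).+1) || ((val i == n.-1) && (val j == n.-1)).

Definition LAB (R : realDomainType) (n : nat) (A B D : 'M[R]_n) : Prop :=
  [/\ nonneg_mx D,
      (forall i j, ~~ subdiag_nn_pos i j -> D i j = 0),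
      nonneg_mx (A - D) & nonneg_mx (B - D)].

Definition LAB1 (R : realDomainType) (n : nat) (A B D : 'M[R]_n) : Prop :=
  LAB A B D /\ exists k : 'I_n, row k D != 0 /\ forall i, i != k -> row i D = 0.

(* Main.v *)
Require Import Defs.
From HB Require Import structures.
From mathcomp Require Import all_boot all_order all_algebra.
From mathcomp Require Import complex polyrcf.
From mathcomp Require Import reals.
From mathcomp Require Import ring lra.
Import Order.TTheory GRing.Theory Num.Theory.
Local Open Scope ring_scope.

Lemma char_poly_trmx (F : comNzRingType) n (A : 'M[F]_n) :
  char_poly A^T = char_poly A.
Proof.
rewrite /char_poly -det_tr; congr (\det _).
by apply/matrixP => i j; rewrite !mxE eq_sym.
Qed.

Lemma sum_pos (C : numDomainType) m (F : 'I_m -> C) j0 :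
  (forall i, 0 <= F i) -> 0 < F j0 -> 0 < \sum_i F i.
Proof.
move=> F0 Fj0; rewrite (bigD1 j0) //=; apply: ltr_pwDl => //.
by apply: sumr_ge0 => i _.
Qed.

Lemma stable_of_pos (R : rcfType) m (M : 'M[R]_m) (v : 'rV[R]_m) :
  nonneg_mx M -> (forall j, 0 < v 0 j) -> (forall j, (v *m M) 0 j < v 0 j) ->
  schur_stable M.
Proof.
move=> M0 v0 vM z; rewrite /ceigen.
rewrite (map_char_poly (real_complex R)) -char_poly_trmx -eigenvalue_root_char.
case/eigenvalueP => y yM ynz.
have Ey i : z * y 0 i = \sum_j y 0 j * ((M i j)%:C)%C.
  move/matrixP: yM => /(_ 0 i); rewrite !mxE => <-.
  by apply: eq_bigr => j _; rewrite !mxE.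
have [j0 yj0] : exists j0, y 0 j0 != 0.
  apply/existsP; apply: contraR ynz; rewrite negb_exists => /forallP H.
  by apply/eqP/rowP => j; rewrite mxE; apply/eqP; rewrite -[_ == _]negbK H.
pose S := \sum_i ((v 0 i)%:C)%C * `|y 0 i|.
have vC i : 0 < ((v 0 i)%:C)%C by rewrite ltcR.
have MC i j : 0 <= ((M i j)%:C)%C by rewrite lecR.
have S_gt0 : 0 < S.
  apply: (@sum_pos _ _ _ j0); first by move=> i; apply: mulr_ge0; [apply: ltW | apply: normr_ge0].
  by rewrite mulr_gt0 ?normr_gt0.
have H1 : `|z| * S <= \sum_j `|y 0 j| * (((v *m M) 0 j)%:C)%C.
  rewrite /S mulr_sumr.
  under eq_bigr => i _ do rewrite mulrCA -normrM Ey.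
  apply: (le_trans (y := \sum_i ((v 0 i)%:C)%C * \sum_j `|y 0 j| * ((M i j)%:C)%C)).
    apply: ler_sum => i _; apply: ler_wpM2l; first exact: ltW.
    apply: (le_trans (ler_norm_sum _ _ _)); apply: ler_sum => j _.
    by rewrite normrM (ger0_norm (MC i j)).
  under eq_bigr => i _ do rewrite mulr_sumr.
  rewrite exchange_big /=; apply: ler_sum => j _.
  rewrite mxE rmorph_sum mulr_sumr /=; apply: ler_sum => i _.
  by rewrite rmorphM /= mulrCA.
have H2 : \sum_j `|y 0 j| * (((v *m M) 0 j)%:C)%C < S.
  rewrite /S -subr_gt0 -sumrB; apply: (@sum_pos _ _ _ j0).
    by move=> i; rewrite mulrC -mulrBr mulr_ge0 // subr_ge0 lecR ltW.
  by rewrite mulrC -mulrBr mulr_gt0 ?normr_gt0 // subr_gt0 ltcR.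
by rewrite -(gtr_pMl _ S_gt0); apply: le_lt_trans H2.
Qed.

Lemma sum2 (C : nmodType) k (F : 'I_k -> C) i1 i2 : i1 != i2 ->
  (forall i, i != i1 -> i != i2 -> F i = 0) -> \sum_i F i = F i1 + F i2.
Proof.
move=> ne H; rewrite (bigD1 i1) //= (bigD1 i2) 1?eq_sym //= big1 ?addr0 //.
by move=> i /andP[h1 h2]; apply: H.
Qed.

Section Leslie.
Variables (R : rcfType) (m : nat) (A : 'M[R]_(m.+2)).
Hypothesis (HA : ext_leslie A).
Local Notation N := m.+1.

Definition a j := A (inord 0) (inord j).
Definition s j := A (inord j) (inord j.-1).
Definition c := A (inord N) (inord N).

Lemma inordE (i : 'I_(m.+2)) k : (k <= N)%N -> (i == inord k) = (val i == k).
Proof. by move=> hk; rewrite -(inj_eq val_inj) /= inordK. Qed.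

Lemma a_ge0 j : 0 <= a j. Proof. by case: HA => H _; apply: H. Qed.
Lemma s_ge0 j : 0 <= s j. Proof. by case: HA => H _; apply: H. Qed.
Lemma c_ge0 : 0 <= c. Proof. by case: HA => H _; apply: H. Qed.

Lemma colA (x : 'rV[R]_(m.+2)) j : (j <= N)%N ->
  (x *m A) 0 (inord j) = x 0 (inord 0) * a j +
    (if (j < N)%N then x 0 (inord j.+1) * s j.+1 else x 0 (inord N) * c).
Proof.
move=> hj; rewrite mxE; case: ifP => hjN.
  rewrite (@sum2 _ _ _ (inord 0) (inord j.+1)); last first.
  - move=> i; rewrite !inordE // => h1 h2; case: HA => _ ->; first by rewrite mulr0.
    rewrite /ext_leslie_pos /= inordK ?(ltnW hjN) //=.
    apply/negP => /or3P[/eqP e|/eqP e|/andP[_ /eqP e]].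
    + by move/eqP: h1; apply.
    + by move/eqP: h2; apply.
    + by rewrite e ltnn in hjN.
  - by apply/eqP => /(congr1 val); rewrite /= !inordK.
  by rewrite /a /s.
rewrite (@sum2 _ _ _ (inord 0) (inord N)); last first.
- move=> i; rewrite !inordE // => h1 h2; case: HA => _ ->; first by rewrite mulr0.
  rewrite /ext_leslie_pos /= inordK //.
  apply/negP => /or3P[/eqP e|/eqP e|/andP[/eqP e _]].
  + by move: h1; rewrite /= e.
  + by have := ltn_ord i; rewrite e ltnS hjN.
  + by move/eqP: h2; apply.
- by apply/eqP => /(congr1 val); rewrite /= !inordK.
have -> : j = N by apply/eqP; rewrite eqn_leq hj leqNgt hjN.
by rewrite /a /c.
Qed.

Fixpoint Vp (k : nat) : {poly R} :=
  match k with
  | 0 => (a N)%:P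
  | k'.+1 => a (N - k) *: (('X - c%:P) * 'X^k') + s (N - k') *: Vp k'
  end.

Lemma Vp0 x : (Vp 0).[x] = a N. Proof. by rewrite /= hornerC. Qed.
Lemma VpS k x : (Vp k.+1).[x] = a (N - k.+1) * ((x - c) * x ^+ k) + s (N - k) * (Vp k).[x].
Proof. by rewrite /= !hornerE. Qed.

Lemma Vp_ge0 k x : c <= x -> 0 <= (Vp k).[x].
Proof.
move=> cx; elim: k => [|k IH]; first by rewrite Vp0 a_ge0.
rewrite VpS addr_ge0 // mulr_ge0 ?a_ge0 ?s_ge0 // mulr_ge0 ?subr_ge0 //.
by rewrite exprn_ge0 // (le_trans c_ge0).
Qed.

Lemma size_Vp k : (size (Vp k) <= k.+1)%N.
Proof.
elim: k => [|k IH] /=; first by rewrite size_polyC leq_b1.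
apply: (leq_trans (size_polyD _ _)); rewrite geq_max; apply/andP; split.
  apply: (leq_trans (size_scale_leq _ _)).
  rewrite size_Mmonic ?monicXn ?polyXsubC_eq0 // size_polyXn.
  by rewrite (size_XsubC c).
by apply: (leq_trans (size_scale_leq _ _)); apply: (leq_trans IH).
Qed.

Definition q := ('X - c%:P) * 'X^N - Vp N.

Lemma lead_q : lead_coef q = 1.
Proof.
rewrite /q lead_coefDl.
  by rewrite lead_coef_Mmonic ?monicXn // lead_coefXsubC.
rewrite size_polyN size_Mmonic ?monicXn ?polyXsubC_eq0 // size_polyXn (size_XsubC c).
exact: leq_ltn_trans (size_Vp N) _.
Qed.

Lemma hq x : q.[x] = (x - c) * x ^+ N - (Vp N).[x].
Proof. by rewrite /q !hornerE. Qed.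


Definition wv x : 'rV[R]_(m.+2) :=
  \row_(j < m.+2) (if val j == 0%N then (x - c) * x ^+ N else (Vp (N - j)).[x] * x ^+ j).

Lemma wvE x k : (k <= N)%N ->
  wv x 0 (inord k) = if k == 0%N then (x - c) * x ^+ N else (Vp (N - k)).[x] * x ^+ k.
Proof. by move=> hk; rewrite mxE /= !inordK. Qed.

Lemma eigA x : root q x -> c <= x -> 1 <= x -> eigenvalue A x.
Proof.
move=> /rootP; rewrite hq => /eqP; rewrite subr_eq0 => /eqP hV cx x1.
have x0 : 0 < x by apply: lt_le_trans ltr01 x1.
case: (boolP ((x != c) || (a N != 0))) => [hnz|].
  apply/eigenvalueP; exists (wv x); last first.
    case/orP: hnz => hnz; apply/eqP.
      move/matrixP/(_ 0 (inord 0)); rewrite wvE // eqxx mxE => /eqP.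
      by rewrite mulf_eq0 subr_eq0 (negbTE hnz) expf_eq0 gt_eqF ?andbF.
    move/matrixP/(_ 0 (inord N)); rewrite wvE // subnn Vp0 mxE => /eqP.
    by rewrite mulf_eq0 (negbTE hnz) expf_eq0 gt_eqF ?andbF.
  apply/rowP => j; rewrite -[j]inord_val.
  have hj : (val j <= N)%N by rewrite -ltnS ltn_ord.
  rewrite colA // (@wvE x 0) // eqxx [RHS]mxE (@wvE x j) //.
  case: ltnP => hk.
    rewrite wvE // /=.
    case: eqVneq => [k0|k0].
      rewrite k0 subn1 /= [in RHS]hV VpS subnn subSnn exprS; ring.
    set t := (N - (val j).+1)%N.
    have ht : N = (t + (val j).+1)%N by rewrite /t subnK.
    have -> : (N - val j)%N = t.+1 by rewrite /t subnSK.
    rewrite VpS.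
    have -> : (N - t.+1)%N = val j by rewrite {1}ht addnS subSS addKn.
    have -> : (N - t)%N = (val j).+1 by rewrite {1}ht addKn.
    rewrite {1}ht exprD !exprS; ring.
  have jN : val j = N by apply/eqP; rewrite eqn_leq hj hk.
  rewrite (@wvE x N) // jN subnn Vp0 /=; ring.
rewrite negb_or !negbK => /andP[/eqP xc /eqP aN].
rewrite eigenvalue_root_char -char_poly_trmx -eigenvalue_root_char.
apply/eigenvalueP; exists (delta_mx 0 (inord N)); last first.
  apply/eqP => /matrixP/(_ 0 (inord N)); rewrite !mxE !eqxx /= => /eqP.
  by rewrite oner_eq0.
apply/rowP => j; rewrite -rowE !mxE xc.
case: (eqVneq j (inord N)) => [->|jN]; first by rewrite mulr1.
rewrite mulr0.
case: (eqVneq (val j) 0%N) => j0.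
  by have -> : j = inord 0 by apply/val_inj; rewrite /= inordK.
case: HA => _ -> //.
rewrite /ext_leslie_pos /= inordK // (negbTE j0) /=.
apply/negP => /orP[/eqP e|/andP[/eqP e _]].
  by have := ltn_ord j; rewrite e ltnn.
by move: jN; rewrite -(inj_eq val_inj) /= inordK // e eqxx.
Qed.

Lemma stab_noroot x : schur_stable A -> c <= x -> 1 <= x -> ~~ root q x.
Proof.
move=> st cx x1; apply/negP => r.
have := @eigA x r cx x1; rewrite eigenvalue_root_char => rc.
have H : ceigen A ((x%:C)%C).
  by rewrite /ceigen (fmorph_root (real_complex R)).
have := st _ H; rewrite ger0_norm ?ler0c ?(le_trans ler01) // ltcR.
by rewrite ltNge x1.
Qed.

Fixpoint Qf k : R :=
  match k with
  | 0 => (1 - c)^-1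
  | k'.+1 => 1 + s (N - k') * Qf k'
  end.

Lemma Qf_gt0 k : c < 1 -> 0 < Qf k.
Proof.
move=> c1; elim: k => [|k IH] /=; first by rewrite invr_gt0 subr_gt0.
by rewrite ltr_pwDl // mulr_ge0 ?s_ge0 ?ltW.
Qed.

Lemma leslie_pos : schur_stable A ->
  exists u : 'rV[R]_(m.+2), (forall j, 0 < u 0 j) /\ (forall j, (u *m A) 0 j < u 0 j).
Proof.
move=> st.
have [b hb] : exists b, forall x, b <= x -> 1 <= q.[x].
  have := @poly_pinfty_gt_lc R q; rewrite lead_q => /(_ ltr01) [b hb].
  by exists b.
pose mu := Num.max 1 c.
have qmu : 0 < q.[mu].
  rewrite ltNge; apply/negP => h.
  have m1 : mu <= Num.max mu b by rewrite le_max lexx.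
  have m2 : b <= Num.max mu b by rewrite le_max lexx orbT.
  have [y /andP[y1 y2] ry] := @Num.Theory.poly_ivt R q mu (Num.max mu b) m1
     (introT andP (conj h (le_trans ler01 (hb _ m2)))).
  move: y1; rewrite ge_max => /andP[y1 cy].
  by move: ry; apply/negP; apply: stab_noroot.
have c1 : c < 1.
  rewrite ltNge; apply/negP => c1.
  move: qmu; rewrite /mu max_r // hq subrr mul0r sub0r oppr_gt0 ltNge.
  by rewrite Vp_ge0.
move: qmu; rewrite /mu max_l ?ltW // hq expr1n mulr1 subr_gt0 => q1.
pose d := 1 - c.
have d0 : 0 < d by rewrite /d subr_gt0.
pose V k := (Vp k).[1].
have V0 k : 0 <= V k by apply: Vp_ge0; rewrite ltW.
pose del := 1 - V N / d.
have del0 : 0 < del by rewrite /del subr_gt0 ltr_pdivrMr // mul1r.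
pose Z := s 1 * Qf m.
have Z0 : 0 <= Z by rewrite mulr_ge0 ?s_ge0 // ltW // Qf_gt0.
pose eps := del / (1 + Z).
have eps0 : 0 < eps by rewrite divr_gt0 // ltr_pwDl.
have Z1 : 1 + Z != 0 by rewrite gt_eqF // ltr_pwDl.
have dn0 : d != 0 by rewrite gt_eqF.
pose u : 'rV[R]_(m.+2) :=
  \row_(j < m.+2) (if val j == 0%N then 1 else V (N - j)%N / d + eps * Qf (N - j)%N).
have uE k : (k <= N)%N ->
    u 0 (inord k) = if k == 0%N then 1 else V (N - k)%N / d + eps * Qf (N - k)%N.
  by move=> hk; rewrite mxE /= !inordK.
exists u; split.
  move=> j; rewrite -[j]inord_val uE; last by rewrite -ltnS ltn_ord.
  case: eqP => // _; apply: ltr_wpDl.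
    by apply: divr_ge0 => //; apply: ltW.
  by apply: mulr_gt0 => //; apply: Qf_gt0.
move=> j; rewrite -[j]inord_val.
have hj : (val j <= N)%N by rewrite -ltnS ltn_ord.
rewrite colA // (uE 0%N) // eqxx mul1r (uE j) //.
rewrite -subr_gt0.
case: ltnP => hk.
  rewrite (uE j.+1) //=.
  case: eqVneq => [k0|k0].
    rewrite k0 subn1 /=.
    have hVN : V N = a 0 * d + s 1 * V m.
      by rewrite /V VpS subnn subSnn expr1n mulr1.
    suff -> : 1 - (a 0 + (V m / d + eps * Qf m) * s 1) = eps by [].
    rewrite /eps /del hVN /Z. by field; apply/andP; split.
  set t := (N - (val j).+1)%N.
  have ht : N = (t + (val j).+1)%N by rewrite /t subnK.
  have -> : (N - val j)%N = t.+1 by rewrite /t subnSK.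
  have e1 : (N - t.+1)%N = val j by rewrite {1}ht addnS subSS addKn.
  have e2 : (N - t)%N = (val j).+1 by rewrite {1}ht addKn.
  have hV : V t.+1 = a j * d + s j.+1 * V t.
    by rewrite /V VpS e1 e2 expr1n mulr1.
  have hQ : Qf t.+1 = 1 + s j.+1 * Qf t by rewrite /= e2.
  suff -> : V t.+1 / d + eps * Qf t.+1 - (a j + (V t / d + eps * Qf t) * s j.+1) = eps by [].
  rewrite hV hQ. by field; exact: dn0.
have jN : val j = N by apply/eqP; rewrite eqn_leq hj hk.
rewrite (uE N) // jN subnn /=.
have hV0 : V 0%N = a N by rewrite /V Vp0.
rewrite hV0.
suff -> : a N / d + eps * (1 - c)^-1 - (a N + (a N / d + eps * (1 - c)^-1) * c) = eps by [].
rewrite /d. by field; exact: dn0.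
Qed.

End Leslie.

Lemma pos_vec (R : rcfType) n (A : 'M[R]_n) : ext_leslie A -> schur_stable A ->
  exists u : 'rV[R]_n, (forall j, 0 < u 0 j) /\ (forall j, (u *m A) 0 j < u 0 j).
Proof.
case: n A => [|[|m]] A HA st.
- by exists 0; split; case.
- have A0 : 0 <= A 0 0 by case: HA => H _; apply: H.
  have eA : eigenvalue A (A 0 0).
    apply/eigenvalueP; exists (const_mx 1).
      by apply/rowP => j; rewrite ord1 !mxE big_ord1 !mxE mul1r mulr1.
    by apply/eqP => /matrixP/(_ 0 0); rewrite !mxE => /eqP; rewrite oner_eq0.
  have lt1 : A 0 0 < 1.
    move: eA; rewrite eigenvalue_root_char => rc.
    have H : ceigen A (((A 0 0)%:C)%C).
      by rewrite /ceigen (fmorph_root (real_complex R)).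
    by have := st _ H; rewrite ger0_norm ?ler0c // ltcR.
  exists (const_mx 1); split => j; rewrite ?mxE ?ltr01 //.
  by rewrite ord1 big_ord1 !mxE mul1r.
- exact: leslie_pos.
Qed.

Theorem theorem4 (R : realType) (n : nat) (A B : 'M[R]_n) :
  ext_leslie A -> ext_leslie B -> schur_stable A -> schur_stable B ->
  forall D : 'M[R]_n, LAB1 A B D ->
    schur_stable (block_mx (A - D) D D (B - D)).
Proof.
move=> HA HB sA sB D [[D0 Dz AD BD] [k [_ Hk]]].
have [u [u0 uA]] := @pos_vec _ _ _ HA sA.
have [w [w0 wB]] := @pos_vec _ _ _ HB sB.
pose w' := (u 0 k / w 0 k) *: w.
have c0 : 0 < u 0 k / w 0 k := divr_gt0 (u0 k) (w0 k).
have w'0 j : 0 < w' 0 j by rewrite mxE; exact: mulr_gt0 c0 (w0 j).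
have w'B j : (w' *m B) 0 j < w' 0 j.
  by rewrite -scalemxAl !mxE ltr_pM2l //; have := wB j; rewrite mxE.
have w'k : w' 0 k = u 0 k by rewrite mxE divfK // gt_eqF // w0.
have Dz0 (x : 'rV[R]_n) : x 0 k = 0 -> x *m D = 0.
  move=> xk; apply/rowP => j; rewrite !mxE big1 // => i _.
  case: (eqVneq i k) => [->|ik]; first by rewrite xk mul0r.
  by have := Hk i ik; move/matrixP/(_ 0 j); rewrite !mxE => ->; rewrite mulr0.
apply: (@stable_of_pos _ _ _ (row_mx u w')).
- move=> i j; case: (split_ordP i) => i' ->; case: (split_ordP j) => j' ->.
  + by rewrite block_mxEul.
  + by rewrite block_mxEur.
  + by rewrite block_mxEdl.
  + by rewrite block_mxEdr.
- by move=> j; case: (split_ordP j) => j' ->; rewrite ?row_mxEl ?row_mxEr.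
have e1 : u *m (A - D) + w' *m D = u *m A + (w' - u) *m D.
  by rewrite mulmxBr mulmxBl addrAC addrA.
have e2 : u *m D + w' *m (B - D) = w' *m B + (u - w') *m D.
  by rewrite mulmxBr mulmxBl addrCA.
rewrite mul_row_block e1 e2 !Dz0 ?addr0; last 2 first.
- by rewrite !mxE (divfK (lt0r_neq0 (w0 k))) subrr.
- by rewrite !mxE (divfK (lt0r_neq0 (w0 k))) subrr.
by move=> j; case: (split_ordP j) => j' ->; rewrite ?row_mxEl ?row_mxEr.
Qed.
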